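(* Let $X$ be a real reflexive Banach space and $\varepsilon\in[0,2)$. Then a functional $f\in X^*\setminus\{\theta\}$ is $\varepsilon$-smooth (as an element of the normed space $X^*$) if and only if $\operatorname{diam} M_f^+\le\varepsilon$, where $M_f^+=\{x\in S_X: f(x)=\|f\|\}$.
   Context: For a normed space $Z$ and $z\in Z\setminus\{\theta\}$, $J(z)=\{\phi\in S_{Z^*}:\phi(z)=\|z\|\}$, and $z$ is called $\varepsilon$-smooth if $\operatorname{diam}J(z)\le\varepsilon$, where $\operatorname{diam}A=\sup_{a,b\in A}\|a-b\|$. Here this is applied with $Z=X^*$, so $J(f)\subset S_{X^{**}}$. $S_X$ denotes the unit sphere of $X$. *)

(* Defs.v *)
From HB Require Import structures.
From mathcomp Require Import all_boot all_order all_algebra.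
From mathcomp Require Import all_classical all_reals all_analysis.
Set Implicit Arguments. Unset Strict Implicit. Unset Printing Implicit Defensive.
Import Order.TTheory GRing.Theory Num.Theory.
Import numFieldNormedType.Exports.
Local Open Scope classical_set_scope.
Local Open Scope ring_scope.

Section Duals.
Variables (R : realType) (X : normedModType R).

Definition is_dual (f : X -> R) : Prop :=
  (forall (a : R) (x y : X), f (a *: x + y) = a * f x + f y) /\ continuous f.

Definition dnorm (f : X -> R) : R :=
  sup [set `|f x| | x in [set x : X | `|x| <= 1]].

(* X^** : continuous (w.r.t. dnorm) linear functionals on X^*, represented as
   functions (X -> R) -> R; only their values on X^* matter. *)
Definition is_bidual (P : (X -> R) -> R) : Prop :=
  (forall (a : R) (f g : X -> R), is_dual f -> is_dual g ->
      P (fun x => a * f x + g x) = a * P f + P g) /\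
  (forall f, is_dual f -> forall e : R, 0 < e -> exists2 d : R, 0 < d &
      forall g, is_dual g -> dnorm (fun x => g x - f x) < d -> `|P g - P f| < e).

Definition ddnorm (P : (X -> R) -> R) : R :=
  sup [set `|P f| | f in [set f | is_dual f /\ dnorm f <= 1]].

Definition Jset (f : X -> R) : set ((X -> R) -> R) :=
  [set P | is_bidual P /\ ddnorm P = 1 /\ P f = dnorm f].

Definition diam_bidual (A : set ((X -> R) -> R)) : \bar R :=
  ereal_sup [set r | exists P Q, [/\ A P, A Q & r = (ddnorm (fun f => P f - Q f))%:E]].

Definition eps_smooth (eps : R) (f : X -> R) : Prop :=
  (diam_bidual (Jset f) <= eps%:E)%E.

Definition diam (A : set X) : \bar R :=
  ereal_sup [set r | exists x y, [/\ A x, A y & r = (`|x - y|)%:E]].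

Definition Mplus (f : X -> R) : set X := [set x | `|x| = 1 /\ f x = dnorm f].

Definition reflexive_space : Prop :=
  forall P, is_bidual P -> exists x : X, forall f, is_dual f -> P f = f x.

End Duals.

(* Main.v *)
Require Import Defs.
From HB Require Import structures.
From mathcomp Require Import all_boot all_order all_algebra.
From mathcomp Require Import all_classical all_reals all_analysis.
From mathcomp Require Import ring lra.
Import Order.TTheory GRing.Theory Num.Theory.
Import numFieldNormedType.Exports.
Local Open Scope classical_set_scope.
Local Open Scope ring_scope.
Section HB.
Variables (R : realType) (X : normedModType R).

Definition valid (G : set (X * R)) :=
  (forall a x r y s, G (x, r) -> G (y, s) -> G (a *: x + y, a * r + s)) /\
  (forall x r, G (x, r) -> r <= `|x|).

Lemma valid00 G x r : valid G -> G (x, r) -> G (0, 0).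
Proof.
move=> [cl _] h; have := cl (-1) x r x r h h.
by rewrite scaleN1r mulN1r !addNr.
Qed.

Lemma valid_fun G x r s : valid G -> G (x, r) -> G (x, s) -> r = s.
Proof.
move=> vG hr hs; have [cl dom] := vG.
have h1 := dom _ _ (cl (-1) x r x s hr hs).
have h2 := dom _ _ (cl (-1) x s x r hs hr).
rewrite scaleN1r addNr normr0 mulN1r in h1 h2.
lra.
Qed.

Definition G0 (z : X) : set (X * R) := [set p | exists a : R, p = (a *: z, a * `|z|)].

Lemma valid_G0 z : valid (G0 z).
Proof.
split.
  move=> a x r y s [b [-> ->]] [c [-> ->]]; exists (a * b + c).
  by rewrite scalerDl scalerA mulrDl mulrA.
move=> x r [b [-> ->]]; rewrite normrZ ler_wpM2r //; exact: ler_norm.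
Qed.

Lemma zorn_step z (F : set (set (X * R))) :
  F `<=` (fun G => valid (G `|` G0 z)) -> total_on F subset ->
  valid (\bigcup_(G in F) G `|` G0 z).
Proof.
move=> FP tot.
have key : forall p q, (\bigcup_(G in F) G `|` G0 z) p ->
    (\bigcup_(G in F) G `|` G0 z) q ->
    exists K, [/\ valid K, K `<=` (\bigcup_(G in F) G `|` G0 z), K p & K q].
  move=> p q [[G1 FG1 G1p]|G0p] [[G2 FG2 G2q]|G0q].
  - have [s12|s21] := tot _ _ FG1 FG2.
    + exists (G2 `|` G0 z); split; [exact: FP|..|by left].
      * by move=> u [G2u|G0u]; [left; exists G2|right].
      * by left; apply: s12.
    + exists (G1 `|` G0 z); split; [exact: FP|..|by left; apply: s21].
      * by move=> u [G1u|G0u]; [left; exists G1|right].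
      * by left.
  - exists (G1 `|` G0 z); split; [exact: FP|..|by right].
    * by move=> u [G1u|G0u]; [left; exists G1|right].
    * by left.
  - exists (G2 `|` G0 z); split; [exact: FP|..|by left].
    * by move=> u [G2u|G0u]; [left; exists G2|right].
    * by right.
  - exists (G0 z); split; [exact: valid_G0|..|by []|by []].
    by move=> u G0u; right.
split.
  move=> a x r y s hp hq; have [K [vK KU Kp Kq]] := key _ _ hp hq.
  by apply: KU; apply: vK.1.
move=> x r hp; have [K [vK KU Kp _]] := key _ _ hp hp.
exact: vK.2.
Qed.

Definition ext (H : set (X * R)) w c : set (X * R) :=
  [set p | exists x r t, H (x, r) /\ p = (x + t *: w, r + t * c)].

Lemma extend_step (H : set (X * R)) w :
  valid H -> H (0, 0) -> (forall r, ~ H (w, r)) ->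
  exists c, valid (ext H w c).
Proof.
move=> vH H00 nw; have [cl dom] := vH.
pose L := [set t | exists x r, H (x, r) /\ t = r - `|x - w|].
have Lub : forall y s, H (y, s) -> ubound L (`|y + w| - s).
  move=> y s hys _ [x [r [hxr ->]]].
  have := dom _ _ (cl 1 x r y s hxr hys); rewrite scale1r mul1r => h.
  have e : x + y = (x - w) + (y + w) by rewrite addrACA addNr addr0.
  have h2 := ler_normD (x - w) (y + w); rewrite -e in h2; lra.
have L0 : L !=set0 by exists (0 - `|0 - w|); exists 0, 0.
have hL : has_ubound L by exists (`|0 + w| - 0); exact: Lub H00.
pose c := sup L.
have ci : forall x r, H (x, r) -> r - `|x - w| <= c.
  by move=> x r h; apply: ub_le_sup => //; exists x, r.
have cii : forall y s, H (y, s) -> c <= `|y + w| - s.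
  by move=> y s h; apply: ge_sup => //; exact: Lub.
exists c; split.
  move=> a _ _ _ _ [x [r [t [hxr [-> ->]]]]] [y [s [u [hys [-> ->]]]]].
  exists (a *: x + y), (a * r + s), (a * t + u); split; first exact: cl.
  congr pair.
    by rewrite scalerDr scalerDl scalerA addrACA.
  by rewrite mulrDr mulrDl mulrA addrACA.
move=> _ _ [x [r [t [hxr [-> ->]]]]].
have [t0|t0|->] := ltgtP t 0.
- pose u := - t; have u0 : 0 < u by rewrite oppr_gt0.
  have h := ci _ _ (cl u^-1 x r 0 0 hxr H00).
  rewrite !addr0 in h.
  have e1 : x + t *: w = u *: (u^-1 *: x - w).
    by rewrite scalerBr scalerA mulfV ?gt_eqF // scale1r /u scaleNr opprK.
  rewrite e1 normrZ gtr0_norm //.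
  have := ler_wpM2l (ltW u0) h.
  rewrite mulrBr mulrA mulfV ?gt_eqF // mul1r /u mulNr.
  move=> h3; lra.
- have h := cii _ _ (cl t^-1 x r 0 0 hxr H00).
  rewrite !addr0 in h.
  have e1 : x + t *: w = t *: (t^-1 *: x + w).
    by rewrite scalerDr scalerA mulfV ?gt_eqF // scale1r.
  rewrite e1 normrZ gtr0_norm //.
  have := ler_wpM2l (ltW t0) h.
  rewrite mulrBr mulrA mulfV ?gt_eqF // mul1r.
  move=> h3; lra.
- by rewrite scale0r mul0r !addr0; exact: dom.
Qed.

Lemma hb_norming z : exists g : X -> R,
  [/\ (forall a x y, g (a *: x + y) = a * g x + g y),
      (forall x, `|g x| <= `|x|) & g z = `|z|].
Proof.
have [A [PA Amax]] := Zorn_bigcup (@zorn_step z).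
pose H := A `|` G0 z.
have vH : valid H := PA.
have H00 : H (0, 0) by right; exists 0; rewrite scale0r mul0r.
have tot : forall w, exists r, H (w, r).
  move=> w; apply: contrapT => nw.
  have nw' : forall r, ~ H (w, r) by move=> r hr; apply: nw; exists r.
  have [c vH'] := extend_step _ _ vH H00 nw'.
  apply: (Amax (ext H w c)).
  - split.
    + move=> [x r] Ap; exists x, r, 0; split; first by left.
      by rewrite scale0r mul0r !addr0.
    + move=> sub; apply: (nw' c); left; apply: sub.
      exists 0, 0, 1; split => //; by rewrite scale1r mul1r !add0r.
  - rewrite setUidl; first exact: vH'.
    move=> [x r] g0; exists x, r, 0; split; first by right.
    by rewrite scale0r mul0r !addr0.
have gP : forall w, {r | H (w, r)} := fun w => cid (tot w).
pose g w := sval (gP w).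
have gH w : H (w, g w) := svalP (gP w).
exists g; split.
- move=> a x y; apply: (valid_fun _ _ _ _ vH (gH _)).
  exact: vH.1 _ _ _ _ _ (gH x) (gH y).
- move=> x; rewrite ler_norml; apply/andP; split; last exact: vH.2 _ _ (gH x).
  have := vH.2 _ _ (vH.1 (-1) _ _ _ _ (gH x) H00).
  by rewrite scaleN1r mulN1r !addr0 normrN lerNl.
- apply: (valid_fun _ _ _ _ vH (gH z)); right; exists 1.
  by rewrite scale1r mul1r.
Qed.

End HB.
Section Main.
Variables (R : realType) (X : normedModType R).

Definition lin (f : X -> R) := forall (a : R) (x y : X), f (a *: x + y) = a * f x + f y.
Definition bnd (f : X -> R) := exists M : R, forall x, `|f x| <= M * `|x|.

Lemma lin0 f : lin f -> f 0 = 0.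
Proof. move=> h; have := h 1 0 0; rewrite scale1r addr0 mul1r => e; lra. Qed.

Lemma linZ f a x : lin f -> f (a *: x) = a * f x.
Proof. move=> h; have := h a x 0; rewrite addr0 lin0 // addr0 //. Qed.

Lemma linB f x y : lin f -> f (x - y) = f x - f y.
Proof. move=> h; have := h (-1) y x; rewrite scaleN1r mulN1r addrC => ->; lra. Qed.

Lemma linsub f g : lin f -> lin g -> lin (fun x => g x - f x).
Proof. move=> hf hg a x y; rewrite hf hg; lra. Qed.

Lemma bndsub f g : bnd f -> bnd g -> bnd (fun x => g x - f x).
Proof.
move=> [M hM] [N hN]; exists (N + M) => x.
apply: (le_trans (ler_normB _ _)); rewrite mulrDl; exact: lerD.
Qed.

Lemma dual_bnd f : is_dual f -> bnd f.
Proof.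
move=> [hl hc].
have h := cvgr_dist_lt _ _ (hc 0) 1 ltr01.
have [d d0 hd] := (nbhs_norm0P).1 (h _).
have {}d0 : 0 < d := d0.
exists (2 / d) => x.
have [->|x0] := eqVneq x 0.
  by rewrite (lin0 _ hl) !normr0 mulr0.
have nx : 0 < `|x| by rewrite normr_gt0.
pose k := d / 2 / `|x|.
have k0 : 0 < k by rewrite /k !divr_gt0.
have := hd (k *: x); rewrite /= normrZ gtr0_norm // (lin0 _ hl) sub0r normrN.
rewrite (linZ _ _ _ hl) normrM gtr0_norm //.
have e : k * `|x| = d / 2 by rewrite /k -mulrA mulVf ?gt_eqF // mulr1.
rewrite e => h1; have {h1} h1 := h1 ltac:(lra).
have : `|f x| * (d / 2 / `|x|) < 1 by rewrite mulrC.
rewrite mulrA ltr_pdivrMr // mul1r => h2.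
have -> : 2 / d * `|x| = `|x| / (d / 2).
  by field; rewrite gt_eqF.
rewrite ler_pdivlMr; lra.
Qed.

Lemma dnorm_set_ub f : lin f -> bnd f -> has_ubound [set `|f x| | x in [set x : X | `|x| <= 1]].
Proof.
move=> hl [M hM]; exists `|M| => _ [x hx <-].
apply: (le_trans (hM x)); apply: (le_trans (ler_norm _)).
rewrite normrM ler_piMr //. by rewrite normr_id.
Qed.

Lemma dnorm_le f x : lin f -> bnd f -> `|f x| <= dnorm f * `|x|.
Proof.
move=> hl hb.
have ub := ub_le_sup (dnorm_set_ub _ hl hb).
have [->|x0] := eqVneq x 0.
  by rewrite (lin0 _ hl) !normr0 mulr0.
have nx : 0 < `|x| by rewrite normr_gt0.
have := ub `|f (`|x|^-1 *: x)|; rewrite /dnorm; move=> /(_ ltac:(exists (`|x|^-1 *: x) => //; rewrite /= normrZ normrV ?unitf_gt0 // normr_id mulVf ?gt_eqF //)).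
rewrite (linZ _ _ _ hl) normrM normrV ?unitf_gt0 // normr_id.
by rewrite mulrC ler_pdivrMr.
Qed.

Lemma dnorm_leM (f : X -> R) M : 0 <= M -> (forall x, `|f x| <= M * `|x|) -> dnorm f <= M.
Proof.
move=> M0 hM; apply: ge_sup.
  by exists `|f 0|, 0 => //=; rewrite normr0.
move=> _ [x hx <-]; apply: (le_trans (hM x)); exact: ler_piMr.
Qed.

Lemma lip_cont g : lin g -> (forall x, `|g x| <= `|x|) -> continuous g.
Proof.
move=> hl hg x; apply/cvgrPdist_lt => e e0.
have h := cvgr_dist_lt _ _ (@cvg_id _ (nbhs x)) e e0.
near=> t; rewrite -linB //; apply: (le_lt_trans (hg _)).
near: t; exact: (h _).
Unshelve. all: by end_near.
Qed.

Definition ev (x : X) : (X -> R) -> R := fun g => g x.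

Lemma ev_bidual x : is_bidual (ev x).
Proof.
split; first by [].
move=> f hf e e0; exists (e / (`|x| + 1)).
  by rewrite divr_gt0 // ltr_wpDl.
move=> g hg hd; rewrite /ev.
have hl := linsub _ _ hf.1 hg.1.
have hb := bndsub _ _ (dual_bnd _ hf) (dual_bnd _ hg).
apply: (le_lt_trans (dnorm_le _ x hl hb)).
have x1 : 0 < `|x| + 1 by rewrite ltr_wpDl.
have := ler_wpM2r (normr_ge0 x) (ltW hd).
move=> h; apply: (le_lt_trans h).
rewrite mulrAC ltr_pdivrMr // ltr_pM2l //; lra.
Qed.

Lemma dual_zero : is_dual (fun _ : X => 0).
Proof. split; first by move=> *; rewrite mulr0 addr0. exact: cst_continuous. Qed.

Lemma ddnorm_ev (P : (X -> R) -> R) (x : X) : (forall g, is_dual g -> P g = g x) -> ddnorm P = `|x|.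
Proof.
move=> hP.
have ub : ubound [set `|P f| | f in [set f | is_dual f /\ dnorm f <= 1]] `|x|.
  move=> _ [g [hg g1] <-]; rewrite hP //.
  apply: (le_trans (dnorm_le _ x hg.1 (dual_bnd _ hg))).
  by rewrite ler_piMl.
apply/eqP; rewrite eq_le; apply/andP; split.
  apply: ge_sup => //; exists `|P (fun _ => 0)|, (fun _ => 0) => //.
  split; first exact: dual_zero.
  by apply: dnorm_leM => // y; rewrite normr0 mul1r.
have [g [gl gb gx]] := @hb_norming R X x.
have hg : is_dual g by split => //; exact: lip_cont.
apply: (ub_le_sup (ex_intro _ _ ub)); exists g.
  split => //; apply: dnorm_leM => // y; rewrite mul1r; exact: gb.
by rewrite hP // gx normr_id.
Qed.

End Main.
Theorem lemma2p4 (R : realType) (X : completeNormedModType R) (eps : R)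
  (heps0 : 0 <= eps) (heps2 : eps < 2) (hrefl : reflexive_space X)
  (f : X -> R) (hf : is_dual f) (hf0 : f <> (fun _ => 0)) :
  eps_smooth eps f <-> (diam (Mplus f) <= eps%:E)%E.
Proof.
have evJ : forall x : X, Mplus f x -> Jset f (ev R X x).
  move=> x [x1 fx]; split; first exact: ev_bidual.
  split; last by [].
  by rewrite (@ddnorm_ev R X (ev R X x) x) // x1.
have evD : forall x y : X, ddnorm (fun g => ev R X x g - ev R X y g) = `|x - y|.
  move=> x y; apply: ddnorm_ev => g hg.
  by rewrite /ev (linB _ _ _ _ _ hg.1).
split => h.
  apply: ge_ereal_sup => _ [x [y [Mx My ->]]].
  apply: le_trans h; apply: ereal_sup_ubound.
  exists (ev R X x), (ev R X y); split; [exact: evJ|exact: evJ|by rewrite evD].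
apply: ge_ereal_sup => _ [P [Q [JP JQ ->]]].
have [x Px] := hrefl P JP.1.
have [y Qy] := hrefl Q JQ.1.
have Mx : Mplus f x.
  split; first by rewrite -(@ddnorm_ev R X P x Px) JP.2.1.
  by rewrite -Px // JP.2.2.
have My : Mplus f y.
  split; first by rewrite -(@ddnorm_ev R X Q y Qy) JQ.2.1.
  by rewrite -Qy // JQ.2.2.
have -> : ddnorm (fun g => P g - Q g) = `|x - y|.
  apply: ddnorm_ev => g hg.
  by rewrite Px // Qy // (linB _ _ _ _ _ hg.1).
apply: le_trans h; apply: ereal_sup_ubound.
by exists x, y.
Qed.
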